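(* Let $G=(V,E)$ be a finite, connected, bipartite cubic graph and $n>0$. For every $A\in\mathcal F(G)$ and every pair $x,y\in V$, the states $(A,x,x)$ and $(A,y,y)$ of $\mathcal R(G)$ intercommunicate under $P_{G,n}$: the chain started at $(A,x,x)$ reaches $(A,y,y)$ with positive probability, and vice versa.
   Context: $\mathcal F(G)=\{A\subseteq E: d_w(A)=2\text{ for all }w\in V\}$ (the 2-factors of $G$). Let $G=(V,E)$ be a finite, connected, bipartite cubic (3-regular) graph and $n>0$. For $A\subseteq E$ and $w\in V$ let $d_w(A)$ be the number of edges of $A$ incident to $w$, and let $\partial A$ be the set of vertices $w$ with $d_w(A)$ odd. Let $\mathcal R(G)$ be the set of ordered triples $(A,u,v)$ with $A\subseteq E$, $u,v\in V$, such that $\partial A=\{u,v\}$ if $u\ne v$ and $\partial A=\emptyset$ if $u=v$, $d_w(A)\ge1$ for all $w\in V$, and $d_u(A)+d_v(A)\ge4$. For $(A,u,v)\in\mathcal R(G)$ let $C_{uv}(A)$ be the connected component of $(V,A)$ containing $u$ (and $v$). Partition $\mathcal R(G)$ into: $\mathcal E$, the states where $C_{uv}(A)$ is a cycle (equivalently $u=v$); $\mathcal T$, where $C_{uv}(A)$ is a tadpole graph (a cycle with a path attached at one of its endpoints; equivalently $\{d_u(A),d_v(A)\}=\{1,3\}$); $\Theta$, where $C_{uv}(A)$ is a theta graph (two degree-3 vertices joined by three internally vertex-disjoint paths); $\mathcal D$, where $C_{uv}(A)$ is a dumbbell graph (two vertex-disjoint cycles joined by a path of length $\ge1$). An edge of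 $A$ is a bridge if deleting it from $(V,A)$ increases the number of connected components. $\triangle$ denotes symmetric difference. The Markov chain $P_{G,n}$ on $\mathcal R(G)$ is defined as follows: from the state $(A,u,v)$, for each edge $e=uu'\in E$ incident to $u$ it moves to $(A\triangle e,u',v)$, and for each edge $e=vv'\in E$ incident to $v$ it moves to $(A\triangle e,u,v')$, where such a move (along edge $e$ incident to the moved defect) has probability $1/2$ if $(A,u,v)\in\mathcal E\cup\mathcal T$ and $e\notin A$; $1/6$ if $(A,u,v)\in\Theta$; $n/(2(n+2))$ if $(A,u,v)\in\mathcal D$ and $e$ is a bridge of $(V,A)$; $1/(2(n+2))$ if $(A,u,v)\in\mathcal D$ and $e\in A$ is not a bridge; and $0$ otherwise. (If $u=v$, the two moves along the unique edge $e\notin A$ at $u$ lead to the distinct states $(A\cup e,u',u)$ and $(A\cup e,u,u')$.) All other transitions, including all identity transitions, have probability $0$. *)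

(* Defs.v *)
From HB Require Import structures.
From mathcomp Require Import all_boot all_order all_algebra.
Set Implicit Arguments. Unset Strict Implicit. Unset Printing Implicit Defensive.
Import Order.TTheory GRing.Theory Num.Theory.

Section Defs.
Variables (T : finType) (adj : rel T).

Definition edges : {set {set T}} := [set [set x; y] | x in T, y in T & adj x y].

Definition cubic : Prop := forall x : T, #|[set y | adj x y]| = 3.
Definition connected_graph : Prop := forall x y : T, connect adj x y.
Definition bipartite : Prop := exists c : T -> bool, forall x y, adj x y -> c x != c y.

Definition deg (A : {set {set T}}) (w : T) : nat := #|[set e in A | w \in e]|.
Definition bdry (A : {set {set T}}) : {set T} := [set w | odd (deg A w)].

Definition two_factor (A : {set {set T}}) : Prop :=
  A \subset edges /\ forall w, deg A w = 2.

Definition arel (A : {set {set T}}) : rel T := fun x y => (x != y) && ([set x; y] \in A).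

Definition ncomp (A : {set {set T}}) : nat := n_comp (arel A) T.

Definition bridge (A : {set {set T}}) (e : {set T}) : bool :=
  (e \in A) && (ncomp A < ncomp (A :\ e)).

Definition state := ({set {set T}} * T * T)%type.

Definition inR (s : state) : bool :=
  let: (A, u, v) := s in
  [&& A \subset edges,
      bdry A == (if u == v then set0 else [set u; v]),
      [forall w, 0 < deg A w] & 4 <= deg A u + deg A v].

Definition comp_has_bridge (A : {set {set T}}) (u : T) : bool :=
  [exists e in A, bridge A e && [exists w in e, connect (arel A) u w]].

Definition inET (s : state) : bool :=
  let: (A, u, v) := s in
  (u == v) || ((deg A u == 1) && (deg A v == 3)) || ((deg A u == 3) && (deg A v == 1)).
Definition inTheta (s : state) : bool :=
  let: (A, u, v) := s in
  [&& u != v, deg A u == 3, deg A v == 3 & ~~ comp_has_bridge A u].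
Definition inD (s : state) : bool :=
  let: (A, u, v) := s in
  [&& u != v, deg A u == 3, deg A v == 3 & comp_has_bridge A u].

Definition symdiff1 (A : {set {set T}}) (e : {set T}) : {set {set T}} :=
  if e \in A then A :\ e else e |: A.

(* probability of the move along edge e (incident to the moved defect) *)
Definition move_prob (R : realFieldType) (n : R) (s : state) (e : {set T}) : R :=
  (let: (A, u, v) := s in
  if inET s then (if e \notin A then 2^-1 else 0)
  else if inTheta s then 6^-1
  else if inD s then
    (if bridge A e then n / (2 * (n + 2))
     else if e \in A then (2 * (n + 2))^-1 else 0)
  else 0)%R.

Definition P (R : realFieldType) (n : R) (s t : state) : R :=
  (let: (A, u, v) := s in
  (\sum_(u' | adj u u')
      ((t == (symdiff1 A [set u; u'], u', v))%:R * move_prob n s [set u; u']))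
  + (\sum_(v' | adj v v')
      ((t == (symdiff1 A [set v; v'], u, v'))%:R * move_prob n s [set v; v'])))%R.

Definition step (R : realFieldType) (n : R) : rel state :=
  fun s t => [&& inR s, inR t & (0 < P n s t)%R].

End Defs.

(* Main.v *)
Require Import Defs.
From HB Require Import structures.
From mathcomp Require Import all_boot all_order all_algebra.
From mathcomp Require Import zify.
Import Order.TTheory GRing.Theory Num.Theory.
Set Implicit Arguments. Unset Strict Implicit. Unset Printing Implicit Defensive.

Module MAux. Section Aux.
Variables (T : finType) (adj : rel T).

Lemma degU1 (B : {set {set T}}) e w : e \notin B -> deg (e |: B) w = deg B w + (w \in e).
Proof.
move=> eB; rewrite /deg; case: (boolP (w \in e)) => we.
  have -> : [set e0 in e |: B | w \in e0] = e |: [set e0 in B | w \in e0].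
    by apply/setP=> e0; rewrite !inE; case: eqP => [->|] //=; rewrite we.
  by rewrite cardsU1 inE (negbTE eB) /= addn1.
have -> : [set e0 in e |: B | w \in e0] = [set e0 in B | w \in e0].
  by apply/setP=> e0; rewrite !inE; case: eqP => [->|] //=; rewrite (negbTE we) andbF.
by rewrite addn0.
Qed.

Lemma degD1 (B : {set {set T}}) e w : e \in B -> deg B w = deg (B :\ e) w + (w \in e).
Proof.
move=> eB; rewrite /deg; case: (boolP (w \in e)) => we.
  rewrite (cardsD1 e) inE eB we addnC /=; congr (_ + _).
  by apply: eq_card => e0; rewrite !inE andbA.
rewrite /= addn0; apply: eq_card => e0; rewrite !inE.
by case: eqP => [->|] //=; rewrite (negbTE we) !andbF.
Qed.

Lemma in_edges x y : adj x y -> [set x; y] \in edges adj.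
Proof. by move=> h; apply/imset2P; apply: (Imset2spec (x1:=x) (x2:=y)); rewrite ?inE. Qed.

Lemma edges_inv e : e \in edges adj -> exists2 a, exists2 b, adj a b & e = [set a; b] & True.
Proof. by case/imset2P=> a b _; rewrite inE => h ->; exists a => //; exists b. Qed.

Lemma sub_U1 (B : {set {set T}}) e : B \subset edges adj -> e \in edges adj -> e |: B \subset edges adj.
Proof. by move=> hB he; rewrite subUset sub1set he. Qed.

Lemma sub_D1 (B : {set {set T}}) e : B \subset edges adj -> B :\ e \subset edges adj.
Proof. by move=> hB; apply: subset_trans hB; apply: subD1set. Qed.

Lemma sd_in (B : {set {set T}}) e : e \in B -> symdiff1 B e = B :\ e.
Proof. by rewrite /symdiff1 => ->. Qed.
Lemma sd_out (B : {set {set T}}) e : e \notin B -> symdiff1 B e = e |: B.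
Proof. by rewrite /symdiff1 => /negbTE ->. Qed.

Lemma inR_uv (B : {set {set T}}) u v du dv : u != v -> B \subset edges adj ->
  (forall w, deg B w = if w == u then du else if w == v then dv else 2) ->
  odd du -> odd dv -> 0 < du -> 0 < dv -> 4 <= du + dv -> inR adj (B, u, v).
Proof.
move=> uv hB D odu odv pu pv s; rewrite /inR /=. have /negPf -> := uv. rewrite hB !D eqxx.
have /negPf -> : v != u by rewrite eq_sym. rewrite eqxx s andbT /=.
apply/andP; split.
  apply/eqP/setP=> w; rewrite !inE D.
  by case: (eqVneq w u) => [->|_] //=; case: (eqVneq w v).
apply/forallP=> w; rewrite D; case: ifP => //; case: ifP => //.
Qed.

Lemma inR_uu (B : {set {set T}}) u : B \subset edges adj -> (forall w, deg B w = 2) -> inR adj (B, u, u).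
Proof.
move=> hB D; rewrite /inR /= hB eqxx !D /= andbT; apply/andP; split.
  by apply/eqP/setP=> w; rewrite !inE D.
by apply/forallP=> w; rewrite D.
Qed.

End Aux. End MAux. Import MAux.

Lemma degD1' (T : finType) (B : {set {set T}}) e w : e \in B -> deg (B :\ e) w = deg B w - (w \in e).
Proof. by move=> eB; rewrite (degD1 w eB) addnK. Qed.

Module MProb. Section Prob.
Variables (T : finType) (adj : rel T) (R : realFieldType) (n : R).
Hypothesis n_pos : (0 < n)%R.

Local Open Scope ring_scope.

Lemma n2_pos : 0 < 2 * (n + 2) :> R.
Proof. by rewrite mulr_gt0 // addr_gt0. Qed.

Lemma mp_ge0 (s : state T) (e : {set T}) : 0 <= move_prob n s e.
Proof.
case: s => [[B u v]]; rewrite /move_prob.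
have h1 := n2_pos.
repeat case: ifP => _ //; rewrite ?invr_ge0 ?ler0n // ?divr_ge0 ?ltW //.
Qed.

Lemma mp_ET (B : {set {set T}}) u v (e : {set T}) : inET (B, u, v) -> e \notin B -> 0 < move_prob n (B, u, v) e.
Proof. by rewrite /move_prob => -> ->; rewrite invr_gt0 ltr0n. Qed.

Lemma mp_33 (B : {set {set T}}) u v (e : {set T}) : u != v -> deg B u = 3%N -> deg B v = 3%N -> e \in B ->
  0 < move_prob n (B, u, v) e.
Proof.
move=> uv du dv eB; rewrite /move_prob.
have -> : inET (B, u, v) = false by rewrite /inET (negPf uv) du dv.
rewrite /inTheta /inD uv du dv /=.
case: (comp_has_bridge B u) => /=; last by rewrite invr_gt0 ltr0n.
have h1 := n2_pos.
case: ifP => _; first by rewrite divr_gt0.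
by rewrite eB invr_gt0.
Qed.

Lemma P_pos_u (B : {set {set T}}) u v u' B' : adj u u' -> symdiff1 B [set u; u'] = B' ->
  0 < move_prob n (B, u, v) [set u; u'] -> 0 < P adj n (B, u, v) (B', u', v).
Proof.
move=> a sd mp; rewrite /P; cbv beta iota.
apply: ltr_wpDr; first by apply: sumr_ge0 => i _; apply: mulr_ge0; [exact: ler0n | exact: mp_ge0].
rewrite (bigD1 u') // sd eqxx mul1r.
by apply: ltr_wpDr => //; rewrite sumr_ge0 // => i _; apply: mulr_ge0; [exact: ler0n | exact: mp_ge0].
Qed.

Lemma P_pos_v (B : {set {set T}}) u v v' B' : adj v v' -> symdiff1 B [set v; v'] = B' ->
  0 < move_prob n (B, u, v) [set v; v'] -> 0 < P adj n (B, u, v) (B', u, v').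
Proof.
move=> a sd mp; rewrite /P; cbv beta iota.
apply: ltr_wpDl; first by apply: sumr_ge0 => i _; apply: mulr_ge0; [exact: ler0n | exact: mp_ge0].
rewrite (bigD1 v') // sd eqxx mul1r.
by apply: ltr_wpDr => //; rewrite sumr_ge0 // => i _; apply: mulr_ge0; [exact: ler0n | exact: mp_ge0].
Qed.
End Prob. End MProb. Import MProb.

Module MGraph. Section Graph.
Variables (T : finType) (adj : rel T).
Hypotheses (adj_sym : symmetric adj) (adj_irr : irreflexive adj) (Hcubic : cubic adj).
Variable A : {set {set T}}.
Hypothesis HA : two_factor adj A.

Lemma adj_neq (x y : T) : adj x y -> x != y.
Proof. by apply: contraTneq => ->; rewrite adj_irr. Qed.

Lemma set2_inj (w y1 y2 : T) : w != y1 -> [set w; y1] = [set w; y2] -> y1 = y2.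
Proof.
move=> wy h; have : y1 \in [set w; y2] by rewrite -h !inE eqxx orbT.
by rewrite !inE eq_sym (negPf wy) /= => /eqP.
Qed.

Lemma partner (w : T) : exists2 w', adj w w' & [set w; w'] \notin A.
Proof.
case: (boolP [exists y, adj w y && ([set w; y] \notin A)]).
  by case/existsP=> y /andP[h1 h2]; exists y.
rewrite negb_exists => /forallP hall; exfalso.
have : #|[set [set w; y] | y in [set y | adj w y]]| <= deg A w.
  apply: subset_leq_card; apply/subsetP=> e /imsetP[y]; rewrite inE => hy ->.
  have := hall y; rewrite hy /= negbK => hA.
  by rewrite inE hA !inE eqxx.
rewrite card_in_imset ?Hcubic ?HA.2 //.
move=> y1 y2; rewrite !inE => h1 h2; apply: set2_inj; exact: adj_neq.
Qed.

Lemma partner_uniq (w y1 y2 : T) : adj w y1 -> adj w y2 -> [set w; y1] \notin A ->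
  [set w; y2] \notin A -> y1 = y2.
Proof.
move=> a1 a2 n1 n2; apply/eqP; apply/negPn/negP => y12.
set N := [set y | adj w y].
have cN : #|N :\ y1 :\ y2| = 1%N.
  have := Hcubic w; rewrite -/N (cardsD1 y1) (cardsD1 y2 (N :\ y1)) !inE a1 a2 eq_sym y12 /=.
  lia.
have : deg A w <= #|[set [set w; y] | y in N :\ y1 :\ y2]|.
  apply: subset_leq_card; apply/subsetP=> e; rewrite inE => /andP[eA we].
  have [a [b ab ee] _] := edges_inv (subsetP HA.1 e eA).
  move: we; rewrite ee !inE => /orP[] /eqP wab.
    subst a; apply/imsetP; exists b => //; rewrite !inE ab andbT.
    by apply/andP; split; apply: contraTneq eA => bb; rewrite ee bb.
  subst b; rewrite setUC; apply/imsetP; exists a => //; rewrite !inE adj_sym ab andbT.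
  by apply/andP; split; apply: contraTneq eA => bb; rewrite ee setUC bb.
have := leq_imset_card (fun y => [set w; y]) (N :\ y1 :\ y2).
rewrite cN HA.2; lia.
Qed.
End Graph. End MGraph. Import MGraph.

Ltac vc4 w x x' z z' DIST :=
  case: (eqVneq w x) => [?|?]; [by subst; rewrite ?eqxx ?DIST|];
  case: (eqVneq w x') => [?|?]; [by subst; rewrite ?eqxx ?DIST|];
  case: (eqVneq w z) => [?|?]; [by subst; rewrite ?eqxx ?DIST|];
  case: (eqVneq w z') => [?|?]; [by subst; rewrite ?eqxx ?DIST|]; by [].

Ltac vc1 h DIST := subst; rewrite ?eqxx ?DIST /= in h *; lia.

Module MMain. Section Main.
Variables (T : finType) (adj : rel T).
Hypotheses (adj_sym : symmetric adj) (adj_irr : irreflexive adj) (Hcubic : cubic adj).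
Variables (R : realFieldType) (n : R).
Hypothesis n_pos : (0 < n)%R.
Variable A : {set {set T}}.
Hypothesis HA : two_factor adj A.

Lemma mkstep (s t : state T) : inR adj s -> inR adj t -> (0 < P adj n s t)%R -> step adj n s t.
Proof. by move=> *; apply/and3P. Qed.

Lemma match_step (x x' : T) : adj x x' -> [set x; x'] \notin A ->
  connect (step adj n) (A, x, x) (A, x', x').
Proof.
move=> a eA; set e := [set x; x'].
have xx' := adj_neq adj_irr a.
have x'x : x' != x by rewrite eq_sym.
have DIST := (negPf xx', negPf x'x).
have hA := HA.1.
have D1 w : deg (e |: A) w = if w == x' then 3 else if w == x then 3 else 2.
  rewrite /e degU1 // HA.2 !inE.
  case: (eqVneq w x') => [?|n1]; first by subst; rewrite ?eqxx ?DIST.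
  case: (eqVneq w x) => [?|n2]; first by subst; rewrite ?eqxx ?DIST.
  by rewrite ?(negPf n1) ?(negPf n2).
have sub1 : e |: A \subset edges adj by apply: sub_U1 => //; apply: in_edges.
have eB1 : e \in e |: A by rewrite !inE eqxx.
apply: (connect_trans (y := (e |: A, x', x))); apply: connect1; apply: mkstep.
- by apply: inR_uu => //; exact: HA.2.
- by apply: (@inR_uv _ _ _ _ _ 3 3).
- apply: P_pos_u => //; first exact: sd_out.
  by apply: mp_ET => //; rewrite /inET eqxx.
- by apply: (@inR_uv _ _ _ _ _ 3 3).
- by apply: inR_uu => //; exact: HA.2.
- apply: P_pos_v => //; first by rewrite sd_in // setU1K.
  by apply: mp_33 => //; rewrite D1 ?eqxx ?DIST.
Qed.

Lemma A_step (x z : T) : adj x z -> [set x; z] \in A ->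
  connect (step adj n) (A, x, x) (A, z, z).
Proof.
move=> axz gA.
have [x' axx' eA] := partner adj_irr Hcubic HA x.
have [z' azz' fA] := partner adj_irr Hcubic HA z.
set e := [set x; x'] in eA *; set g := [set x; z] in gA *; set f := [set z; z'] in fA *.
have xx' := adj_neq adj_irr axx'.
have xz := adj_neq adj_irr axz.
have zz' := adj_neq adj_irr azz'.
have x'z : x' != z by apply: contraNneq eA => h; rewrite /e h.
have xz' : x != z' by apply: contraNneq fA => h; rewrite /f -h setUC.
have x'z' : x' != z'.
  apply/eqP => ee; move/eqP: xz; apply.
  apply: (partner_uniq adj_sym Hcubic HA (w := x') (y1 := x) (y2 := z)).
  - by rewrite adj_sym.
  - by rewrite ee adj_sym.
  - by rewrite setUC.
  - by rewrite ee setUC.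
have x'x : x' != x by rewrite eq_sym.
have zx : z != x by rewrite eq_sym.
have zx' : z != x' by rewrite eq_sym.
have z'x : z' != x by rewrite eq_sym.
have z'z : z' != z by rewrite eq_sym.
have z'x' : z' != x' by rewrite eq_sym.
have DIST := (negPf xx', negPf xz, negPf xz', negPf x'x, negPf x'z, negPf x'z',
   negPf zx, negPf zx', negPf zz', negPf z'x, negPf z'x', negPf z'z).
have ge : (g == e) = false.
  apply/negbTE/eqP => h; move/eqP: x'z; apply; exact: (set2_inj xx' (esym h)).
have fe : (f == e) = false.
  apply/negbTE/negP => /eqP h.
  have : z \in e by rewrite -h !inE eqxx.
  by rewrite !inE !DIST.
have gf : (g == f) = false.
  apply/negbTE/negP => /eqP h.
  have : x \in f by rewrite -h !inE eqxx.
  by rewrite !inE !DIST.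
have eg : (e == g) = false by rewrite eq_sym.
have ef : (e == f) = false by rewrite eq_sym.
have fg : (f == g) = false by rewrite eq_sym.
have EDIST := (ge, fe, gf, eg, ef, fg).
set B1 := e |: A. set B2 := B1 :\ g. set B3 := f |: B2. set B4 := B3 :\ e. set B5 := g |: B4.
have gB1 : g \in B1 by rewrite !inE gA orbT.
have fB2 : f \notin B2 by rewrite !inE !EDIST (negPf fA) andbF.
have eB3 : e \in B3 by rewrite !inE !EDIST eqxx.
have gB4 : g \notin B4 by rewrite !inE !EDIST eqxx.
have fB5 : f \in B5 by rewrite !inE !EDIST eqxx.
have hA := HA.1.
have ee : e \in edges adj by apply: in_edges.
have ge' : g \in edges adj by apply: in_edges.
have fe' : f \in edges adj by apply: in_edges.
have s1 : B1 \subset edges adj by apply: sub_U1.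
have s2 : B2 \subset edges adj by apply: sub_D1.
have s3 : B3 \subset edges adj by apply: sub_U1.
have s4 : B4 \subset edges adj by apply: sub_D1.
have s5 : B5 \subset edges adj by apply: sub_U1.
have D1 w : deg B1 w = if w == x' then 3 else if w == x then 3 else 2.
  rewrite /B1 degU1 // HA.2 /e !inE.
  case: (eqVneq w x') => [?|n1]; first by subst; rewrite ?eqxx ?DIST.
  case: (eqVneq w x) => [?|n2]; first by subst; rewrite ?eqxx ?DIST.
  by [].
have D2 w : deg B2 w = if w == x' then 3 else if w == z then 1 else 2.
  rewrite /B2 degD1' // D1 /g !inE; vc4 w x x' z z' DIST.
have D3 w : deg B3 w = if w == x' then 3 else if w == z' then 3 else 2.
  rewrite /B3 degU1 // D2 /f !inE; vc4 w x x' z z' DIST.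
have D4 w : deg B4 w = if w == x then 1 else if w == z' then 3 else 2.
  rewrite /B4 degD1' // D3 /e !inE; vc4 w x x' z z' DIST.
have D5 w : deg B5 w = if w == z then 3 else if w == z' then 3 else 2.
  rewrite /B5 degU1 // D4 /g !inE; vc4 w x x' z z' DIST.
have B6 : B5 :\ f = A.
  apply/setP => e0; rewrite /B5 /B4 /B3 /B2 /B1 !inE.
  case: (eqVneq e0 f) => [->|_] /=; first by rewrite (negPf fA).
  case: (eqVneq e0 g) => [->|_] /=; first by rewrite gA.
  case: (eqVneq e0 e) => [->|_] /=; first by rewrite (negPf eA).
  by [].
have RB1 : inR adj (B1, x', x) by apply: (@inR_uv _ _ _ _ _ 3 3).
have RB2 : inR adj (B2, x', z) by apply: (@inR_uv _ _ _ _ _ 3 1).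
have RB3 : inR adj (B3, x', z') by apply: (@inR_uv _ _ _ _ _ 3 3).
have RB4 : inR adj (B4, x, z') by apply: (@inR_uv _ _ _ _ _ 1 3).
have RB5 : inR adj (B5, z, z') by apply: (@inR_uv _ _ _ _ _ 3 3).
have RA u : inR adj (A, u, u) by apply: inR_uu => //; exact: HA.2.
apply: (connect_trans (y := (B1, x', x))); first (apply: connect1; apply: mkstep => //).
  apply: P_pos_u => //; first exact: sd_out.
  by apply: mp_ET => //; rewrite /inET eqxx.
apply: (connect_trans (y := (B2, x', z))); first (apply: connect1; apply: mkstep => //).
  apply: P_pos_v => //; first exact: sd_in.
  by apply: mp_33 => //; rewrite D1 ?eqxx ?DIST.
apply: (connect_trans (y := (B3, x', z'))); first (apply: connect1; apply: mkstep => //).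
  apply: P_pos_v => //; first exact: sd_out.
  by apply: mp_ET => //; rewrite /inET !D2 ?eqxx ?DIST /= ?orbT.
apply: (connect_trans (y := (B4, x, z'))); first (apply: connect1; apply: mkstep => //).
  apply: P_pos_u; [done | by rewrite adj_sym | by rewrite /e setUC sd_in |].
  by apply: mp_33 => //; rewrite ?D3 ?eqxx ?DIST // setUC.
apply: (connect_trans (y := (B5, z, z'))); first (apply: connect1; apply: mkstep => //).
  apply: P_pos_u => //; first exact: sd_out.
  by apply: mp_ET => //; rewrite /inET !D4 ?eqxx ?DIST /= ?orbT.
apply: connect1; apply: mkstep => //.
apply: P_pos_v; [done | by rewrite adj_sym | by rewrite /f setUC sd_in |].
by apply: mp_33 => //; rewrite ?D5 ?eqxx ?DIST // setUC.
Qed.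

Lemma nb_step (x y : T) : adj x y -> connect (step adj n) (A, x, x) (A, y, y).
Proof. by move=> h; case: (boolP ([set x; y] \in A)) => hA; [apply: A_step | apply: match_step]. Qed.

Lemma path_step (x y : T) : connect adj x y -> connect (step adj n) (A, x, x) (A, y, y).
Proof.
move/connectP => [p]; elim: p x => [|a p IH] x /=; first by move=> _ ->.
move=> /andP[h1 h2] ly; exact: connect_trans (nb_step h1) (IH a h2 ly).
Qed.
End Main. End MMain. Import MMain.

Unset Implicit Arguments.
Set Strict Implicit.
Theorem lemma2 (T : finType) (adj : rel T)
  (adj_sym : symmetric adj) (adj_irr : irreflexive adj)
  (Hcubic : cubic adj) (Hconn : connected_graph adj) (Hbip : bipartite adj)
  (R : realFieldType) (n : R) (n_pos : (0 < n)%R)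
  (A : {set {set T}}) (HA : two_factor adj A) (x y : T) :
  connect (step adj n) (A, x, x) (A, y, y) /\ connect (step adj n) (A, y, y) (A, x, x).
Proof. by split; apply: path_step => //; apply: Hconn. Qed.
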